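(* Let $\Psi\vdash\sigma:\Gamma\Rightarrow\Delta$ and $\Psi\vdash\tau:\Delta\Rightarrow\Sigma$ be derivable in $TT_{Sig}$. Suppose $(A:\Sigma)\in\Psi$ and $(y:A\,\tau)\in\Delta$. Then $([\![\sigma]\!](y):A\,(\sigma\cdot\tau))\in\Gamma$.
   Context: **Syntax of $TT_{Sig}$.** - Signatures: $\Psi::=\bullet\mid\Psi,A:\Gamma$. - Contexts: $\Gamma::=\bullet\mid\Gamma,x:X$. - Substitutions: $\sigma::=\epsilon\mid(\sigma,z)$. - Sorts: $X::=A\,\sigma$. - Here $A$ ranges over sort names and $x,z$ over variables. - $(A:\Delta)\in\Psi$ and $(x:X)\in\Gamma$ denote membership in the list. **Rules.** - From $\Psi;\Gamma\vdash$, $\Psi;\Gamma\vdash X$ and $x$ not already bound in $\Gamma$, infer $\Psi;\Gamma,x:X\vdash$; also $\Psi;\bullet\vdash$. - (Substitutions) $\Psi\vdash\epsilon:\Gamma\Rightarrow\bullet$; and from $\Psi\vdash\sigma:\Gamma\Rightarrow\Delta$ and $\Psi;\Gamma\vdash z:\sigma(X)$, infer $\Psi\vdash(\sigma,z):\Gamma\Rightarrow\Delta,x:X$. - (Variables) From $(x:X)\in\Gamma$ and $\Psi;\Gamma\vdash$, infer $\Psi;\Gamma\vdash x:X$. - (Sorts) From $(A:\Delta)\in\Psi$ and $\Psi\vdash\sigma:\Gamma\Rightarrow\Delta$, infer $\Psi;\Gamma\vdash A\,\sigma$. **Auxiliary definitions.** - $|\bullet|=\varnothing$ and $|\Gamma,x:X|=|\Gamma|\amalg\{x\}$.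 - For well-formed $\sigma:\Gamma\Rightarrow\Delta$, define $[\![\sigma]\!]:|\Delta|\to|\Gamma|$ by: $[\![\epsilon]\!]$ is empty, and $[\![\sigma,z]\!]$ sends $y\in|\Delta|$ to $[\![\sigma]\!](y)$ and the last variable $x$ to $z$. - The composite is defined by $\sigma\cdot\epsilon=\epsilon$ and $\sigma\cdot(\tau,z)=(\sigma\cdot\tau,[\![\sigma]\!](z))$. - The action on sorts is $\sigma(A\,\tau)=A\,(\sigma\cdot\tau)$. *)

(* Defs.v *)
From Stdlib Require Import List Arith.
Import ListNotations.

Definition var := nat.
Definition sname := nat.

(* Substitutions  sigma ::= eps | (sigma, z)  as lists, HEAD = LAST entry. *)
Definition subst := list var.
Definition sort : Type := (sname * subst)%type.
(* Contexts  Gamma ::= . | Gamma, x:X  as lists, HEAD = LAST entry. *)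
Definition ctx := list (var * sort).
(* Signatures  Psi ::= . | Psi, A:Gamma  as lists, HEAD = LAST entry. *)
Definition signature := list (sname * ctx).

(* [[sigma]] : |Delta| -> |Gamma| for sigma : Gamma => Delta.
   [[sigma, z]] sends the last variable x of (Delta, x:X) to z and
   every other y in |Delta| to [[sigma]](y).  (Total function; the value
   outside |Delta| is an irrelevant default.) *)
Fixpoint interp (sigma : subst) (Delta : ctx) (y : var) : var :=
  match sigma, Delta with
  | z :: sigma', (x, _) :: Delta' =>
      if Nat.eqb y x then z else interp sigma' Delta' y
  | _, _ => y
  end.

Definition comp (sigma : subst) (Delta : ctx) (tau : subst) : subst :=
  map (interp sigma Delta) tau.

Definition act (sigma : subst) (Delta : ctx) (X : sort) : sort :=
  (fst X, comp sigma Delta (snd X)).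

(* Typing judgments:
   wf_ctx Psi Gamma          :  Psi; Gamma |-
   wf_sort Psi Gamma X       :  Psi; Gamma |- X
   wf_subst Psi s Gamma Delta:  Psi |- s : Gamma => Delta
   has_var Psi Gamma x X     :  Psi; Gamma |- x : X *)
Inductive wf_ctx : signature -> ctx -> Prop :=
| wf_nil : forall Psi, wf_ctx Psi []
| wf_snoc : forall Psi Gamma x X,
    wf_ctx Psi Gamma -> wf_sort Psi Gamma X ->
    ~ In x (map fst Gamma) ->
    wf_ctx Psi ((x, X) :: Gamma)
with wf_subst : signature -> subst -> ctx -> ctx -> Prop :=
| ws_eps : forall Psi Gamma, wf_subst Psi [] Gamma []
| ws_snoc : forall Psi sigma z Gamma Delta x X,
    wf_subst Psi sigma Gamma Delta ->
    has_var Psi Gamma z (act sigma Delta X) ->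
    wf_subst Psi (z :: sigma) Gamma ((x, X) :: Delta)
with has_var : signature -> ctx -> var -> sort -> Prop :=
| hv_var : forall Psi Gamma x X,
    In (x, X) Gamma -> wf_ctx Psi Gamma -> has_var Psi Gamma x X
with wf_sort : signature -> ctx -> sort -> Prop :=
| wsort : forall Psi Gamma A Delta sigma,
    In (A, Delta) Psi -> wf_subst Psi sigma Gamma Delta ->
    wf_sort Psi Gamma (A, sigma).

(* Main.v *)
Require Import Defs.
From Stdlib Require Import List Arith.
Import ListNotations.

Lemma sub_vars Psi s G D : wf_subst Psi s G D -> forall v, In v s -> In v (map fst G).
Proof.
  induction 1; simpl; intros v Hv; [contradiction|].
  destruct Hv as [<-|Hv]; auto.
  inversion H0; subst. apply (in_map fst) in H1. exact H1.
Qed.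

Lemma ctx_vars Psi D : wf_ctx Psi D -> forall y B t, In (y,(B,t)) D ->
  forall v, In v t -> In v (map fst D).
Proof.
  induction 1; simpl; intros y B t Hin v Hv; [contradiction|].
  destruct Hin as [Heq|Hin].
  - inversion Heq; subst. inversion H0; subst. right. eapply sub_vars; eauto.
  - right. eapply IHwf_ctx; eauto.
Qed.

Lemma comp_ext Psi D x X z s t y B :
  wf_ctx Psi ((x,X)::D) -> In (y,(B,t)) D ->
  comp (z::s) ((x,X)::D) t = comp s D t.
Proof.
  intros Hw Hin. inversion Hw; subst.
  unfold comp. apply map_ext_in. intros v Hv. simpl.
  destruct (Nat.eqb_spec v x) as [->|]; auto.
  exfalso. apply H5. eapply ctx_vars; eauto.
Qed.

Theorem mainTheorem3 (Psi : signature) (Gamma Delta Sigma : ctx)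
  (sigma tau : subst) (A y : sname) :
  wf_ctx Psi Delta ->
  wf_subst Psi sigma Gamma Delta ->
  wf_subst Psi tau Delta Sigma ->
  In (A, Sigma) Psi ->
  In (y, (A, tau)) Delta ->
  In (interp sigma Delta y, (A, comp sigma Delta tau)) Gamma.
Proof.
  intros Hc Hs _ _. revert y tau Hc.
  induction Hs; intros y tau Hc Hin; [contradiction|].
  inversion Hc as [|? ? ? ? Hc' Hsort Hfresh]; subst.
  simpl interp.
  destruct (Nat.eqb_spec y x) as [->|Hne].
  - destruct Hin as [Heq|Hin].
    + inversion Heq; subst.
      inversion H; subst.
      unfold comp. rewrite (map_ext_in _ (interp sigma Delta)).
      * exact H0.
      * intros v Hv. simpl. destruct (Nat.eqb_spec v x) as [->|]; auto.
        exfalso. apply Hfresh. inversion Hsort; subst. eapply sub_vars; eauto.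
    + exfalso. apply Hfresh. apply (in_map fst) in Hin. exact Hin.
  - destruct Hin as [Heq|Hin]; [inversion Heq; congruence|].
    erewrite comp_ext; eauto.
Qed.
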